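(* Let $n\ge1$ and let $(p_{kl})_{1\le k<l\le n}$ be numbers in $[0,1]$ (write $p_{lk}=p_{kl}$). Let $\mathscr{G}$ be the random undirected graph on $\{1,\dots,n\}$ in which each pair $\{k,l\}$ is an edge independently with probability $p_{kl}$, and let $\vec{\mathscr{G}}$ be the random directed graph on $\{1,\dots,n\}$ in which, for every $k\neq l$, the directed edge $(k,l)$ from $k$ to $l$ is present with probability $p_{kl}$, all these $n(n-1)$ directed edges being independent. Let $K$ be the event that $\mathscr{G}$ is connected and $G$ the event that $\vec{\mathscr{G}}$ is grounded at vertex $1$. Then $P(K)=P(G)$.
   Context: A directed graph on vertex set $\mathscr{V}$ is grounded at $v\in\mathscr{V}$ if for every $w\in\mathscr{V}$ there is a directed path from $w$ to $v$ (the trivial path for $w=v$). *)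

(* Defs.v *)
(* Discrete (finite) probability written out explicitly:
   a random (di)graph is a finite product of independent Bernoulli edges,
   so the probability of an event is the sum, over the edge sets in the
   event, of the product of the edge / non-edge probabilities. *)
From HB Require Import structures.
From mathcomp Require Import all_boot all_order all_algebra.
Set Implicit Arguments. Unset Strict Implicit. Unset Printing Implicit Defensive.
Import Order.TTheory GRing.Theory Num.Theory.
Local Open Scope ring_scope.

Section RandomGraphs.
Variables (R : realFieldType) (V : finType).
Variable p : V -> V -> R.
(* an ordering of the vertices, used to pick the unordered pair {k,l} as (k,l) with k<l *)
Variable lt : rel V.

Definition upairs : {set V * V} := [set e | lt e.1 e.2].
Definition dpairs : {set V * V} := [set e | e.1 != e.2].

Definition edge_weight (A E : {set V * V}) : R :=
  \prod_(e in A) (if e \in E then p e.1 e.2 else 1 - p e.1 e.2).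

Definition uconnected (E : {set V * V}) : bool :=
  [forall u, forall v,
     connect [rel x y | ((x, y) \in E) || ((y, x) \in E)] u v].

Definition grounded (E : {set V * V}) (v0 : V) : bool :=
  [forall w, connect [rel x y | (x, y) \in E] w v0].

Definition prob_connected : R :=
  \sum_(E : {set V * V} | E \subset upairs) (uconnected E)%:R * edge_weight upairs E.

Definition prob_grounded (v0 : V) : R :=
  \sum_(E : {set V * V} | E \subset dpairs) (grounded E v0)%:R * edge_weight dpairs E.

End RandomGraphs.

(* Main.v *)
Require Import Defs.
From HB Require Import structures.
From mathcomp Require Import all_boot all_order all_algebra.
From mathcomp Require Import ring.
Set Implicit Arguments. Unset Strict Implicit. Unset Printing Implicit Defensive.
Import Order.TTheory GRing.Theory Num.Theory.
Local Open Scope ring_scope.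

Lemma connect_add (T : finType) (e : rel T) a b x y :
  connect [rel u v | e u v || ((u, v) == (a, b))] x y ->
  connect e x y || (connect e x a && connect e b y).
Proof.
move/connectP=> [s].
elim: s x => [|z s IH] x /=.
- by move=> _ ->; rewrite connect0.
- case/andP=> /orP[exz | /eqP [-> ->]] pth ly.
  + have:= IH z pth ly. case/orP=> [czy | /andP[cza cby]].
    * by rewrite (connect_trans (connect1 exz) czy).
    * by rewrite (connect_trans (connect1 exz) cza) cby orbT.
  + have:= IH b pth ly. case/orP=> [cby | /andP[_ cby]]; by rewrite connect0 cby orbT.
Qed.

Definition rE (T : finType) (E : {set T * T}) := [rel x y | (x, y) \in E].

Lemma cadd (T : finType) (S : {set T * T}) a b x y :
  connect (rE ((a, b) |: S)) x y ->
  connect (rE S) x y || (connect (rE S) x a && connect (rE S) b y).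
Proof.
move=> h; apply: connect_add.
by rewrite -(eq_connect (e := rE ((a,b) |: S))) // => u v; rewrite /= in_setU1 orbC.
Qed.

Lemma cmono (T : finType) (S S' : {set T * T}) x y :
  S \subset S' -> connect (rE S) x y -> connect (rE S') x y.
Proof.
move=> sub; apply: connect_sub => u v /= h; apply: connect1; exact: (subsetP sub).
Qed.

Lemma bool4 (a b c d : bool) : (a -> b) -> (a -> c) -> (b -> d) -> (c -> d) ->
  (b -> c -> a) -> (d -> b || c) -> (b + c = a + d)%N.
Proof.
by case: a; case: b; case: c; case: d => //= h1 h2 h3 h4 h5 h6;
  try (by have := h1 isT); try (by have := h2 isT); try (by have := h3 isT);
  try (by have := h4 isT); try (by have := h5 isT isT); try (by have := h6 isT).
Qed.

Lemma ground_mod (T : finType) (E : {set T * T}) (c : T * T) v0 :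
  (grounded (c |: E) v0 + grounded ((c.2, c.1) |: E) v0
   = grounded E v0 + grounded (c |: ((c.2, c.1) |: E)) v0)%N.
Proof.
case: c => k l /=.
rewrite /grounded -!/(rE _).
set E1 := (k, l) |: E; set E2 := (l, k) |: E; set E3 := (k, l) |: E2.
have s01 : E \subset E1 by apply: subsetUr.
have s02 : E \subset E2 by apply: subsetUr.
have s23 : E2 \subset E3 by apply: subsetUr.
have s13 : E1 \subset E3 by rewrite /E3 /E2 setUCA; apply: subsetUr.
have E3e : E3 = (l, k) |: E1 by rewrite /E3 /E2 /E1 setUCA.
have mono (S S' : {set T * T}) : S \subset S' -> [forall w, connect (rE S) w v0] -> [forall w, connect (rE S') w v0].
  by move=> sub /forallP h; apply/forallP => w; exact: cmono sub (h w).
apply: bool4; try exact: mono.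
- move=> /forallP h1 /forallP h2; apply/forallP => w.
  have := cadd (h1 w); have := cadd (h2 w).
  case/orP=> [->//|/andP[a1 a2]]; case/orP=> [->//|/andP[b1 b2]].
  exact: connect_trans a1 b2.
- move=> /forallP h3.
  have C : connect (rE E1) l v0 || connect (rE E2) k v0.
    have := h3 l; rewrite E3e => /cadd /orP[->//|/andP[_ /cadd]].
    case/orP=> [hk|/andP[_ hl]]; first by rewrite (cmono s02 hk) orbT.
    by rewrite (cmono s01 hl).
  case/orP: C => [hl|hk].
  + apply/orP; left; apply/forallP => w.
    have := h3 w; rewrite E3e => /cadd /orP[->//|/andP[a _]].
    exact: connect_trans a hl.
  + apply/orP; right; apply/forallP => w.
    have := h3 w => /cadd /orP[->//|/andP[a _]].
    exact: connect_trans a hk.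
Qed.
Lemma sum_subset_U1 (R : nmodType) (T : finType) (c : T) (S : {set T}) (F : {set T} -> R) :
  c \notin S ->
  \sum_(E : {set T} | E \subset c |: S) F E = \sum_(E : {set T} | E \subset S) (F E + F (c |: E)).
Proof.
move=> cS.
rewrite (bigID (fun E : {set T} => c \in E)) /= addrC big_split /=.
congr (_ + _).
- apply: eq_bigl => E; apply/andP/idP.
  + case=> sub cE; apply/subsetP=> x xE; have:= subsetP sub x xE.
    rewrite in_setU1 => /orP[/eqP xc|//]; by rewrite -xc xE in cE.
  + move=> sub; split; first by apply: subset_trans sub (subsetU1 _ _).
    by apply/negP=> cE; rewrite (subsetP sub _ cE) in cS.
- rewrite (reindex_onto (fun E => c |: E) (fun E => E :\ c)) /=;
    last by move=> E /andP[_ cE]; rewrite setD1K.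
  apply: eq_bigl => E; apply/idP/idP.
  + case/andP=> /andP[sub _] /eqP eqE.
    have cE : c \notin E by rewrite -eqE !inE eqxx.
    apply/subsetP=> x xE; have:= subsetP sub x; rewrite !in_setU1 xE orbT => /(_ isT).
    case/orP=> [/eqP xc|//]; by rewrite -xc xE in cE.
  + move=> sub; have cE : c \notin E by apply/negP=> cE; rewrite (subsetP sub _ cE) in cS.
    rewrite setUS // setU11 setU1K //=.
Qed.

Section Main.
Variables (R : realFieldType) (V : finType) (p : V -> V -> R).
Hypothesis hsym : forall k l, p k l = p l k.

Lemma wU1 (S E : {set V * V}) c : c \notin S ->
  edge_weight p (c |: S) E = (if c \in E then p c.1 c.2 else 1 - p c.1 c.2) * edge_weight p S E.
Proof. by move=> cS; rewrite /edge_weight big_setU1. Qed.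

Lemma wE1 (S E : {set V * V}) c : c \notin S -> edge_weight p S (c |: E) = edge_weight p S E.
Proof.
move=> cS; apply: eq_bigr => e eS; rewrite in_setU1.
have -> // : (e == c) = false by apply/negP => /eqP ec; rewrite -ec eS in cS.
Qed.

Definition rv (P : {set V * V}) : {set V * V} := [set e | (e.2, e.1) \in P].

Lemma rvU1 (c : V * V) (A : {set V * V}) : rv (c |: A) = (c.2, c.1) |: rv A.
Proof.
apply/setP => e; rewrite !inE; congr (_ || _).
by case: e c => [x y] [a b] /=; rewrite !xpair_eqE andbC.
Qed.

Definition Usum (P E0 : {set V * V}) v0 :=
  \sum_(A : {set V * V} | A \subset P)
     edge_weight p P A * (grounded (E0 :|: (A :|: rv A)) v0)%:R.
Definition Dsum (P E0 : {set V * V}) v0 :=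
  \sum_(B : {set V * V} | B \subset P :|: rv P)
     edge_weight p (P :|: rv P) B * (grounded (E0 :|: B) v0)%:R.

Lemma Umod (P E0 : {set V * V}) (v0 : V) (c : V * V) :
  Usum P (c |: E0) v0 + Usum P ((c.2, c.1) |: E0) v0
  = Usum P E0 v0 + Usum P (c |: ((c.2, c.1) |: E0)) v0.
Proof.
rewrite /Usum -!big_split; apply: eq_bigr => A _ /=.
rewrite -!mulrDr -!natrD -!setUA; congr (_ * _%:R); exact: ground_mod.
Qed.

Lemma main (P E0 : {set V * V}) (v0 : V) : (forall e, e \in P -> (e.2, e.1) \notin P) ->
  Usum P E0 v0 = Dsum P E0 v0.
Proof.
move Hn: #|P| => n; elim: n P E0 Hn => [|n IH] P E0 Hn Pok.
  have rv0 : rv set0 = set0 by apply/setP=> e; rewrite !inE.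
  rewrite (cards0_eq Hn) /Usum /Dsum rv0 setU0.
  rewrite (eq_bigl (fun A => A == set0)); last by move=> A; rewrite subset0.
  rewrite big_pred1_eq.
  rewrite (eq_bigl (fun A => A == set0)); last by move=> A; rewrite subset0.
  by rewrite big_pred1_eq rv0 !setU0.
have: P != set0 by rewrite -card_gt0 Hn.
case/set0Pn => c cP.
pose P' := P :\ c.
have HP' : #|P'| = n by move: Hn; rewrite (cardsD1 c) cP add1n => [[]].
have P'ok : forall e, e \in P' -> (e.2, e.1) \notin P'.
  move=> e; rewrite !in_setD1 => /andP[_ eP]; apply/negP => /andP[_ eP'].
  by have := Pok e eP; rewrite eP'.
pose c' := (c.2, c.1).
have c'P : c' \notin P := Pok c cP.
have ncc : (c == c') = false by apply/negP=> /eqP ec; rewrite -ec cP in c'P.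
have nc'c : (c' == c) = false by rewrite eq_sym.
have cP' : c \notin P' by rewrite !inE eqxx.
have c'P' : c' \notin P' by rewrite !inE (negbTE c'P) andbF.
have crv : c \notin rv P' by rewrite !inE -/c' (negbTE c'P) andbF.
have c'rv : c' \notin rv P' by rewrite !inE /= -surjective_pairing eqxx.
have eP : P = c |: P' by rewrite setD1K.
have IHs := fun E => IH P' E HP' P'ok.
clearbody P'.
have pc' : p c.2 c.1 = p c.1 c.2 by rewrite hsym.
have U : Usum P E0 v0 = (1 - p c.1 c.2) * Usum P' E0 v0
                          + p c.1 c.2 * Usum P' (c |: (c' |: E0)) v0.
  rewrite /Usum eP sum_subset_U1 // big_split /= !mulr_sumr.
  congr (_ + _); apply: eq_bigr => A sub.
    rewrite wU1 // ifF ?mulrA //.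
    by apply/negP => cA; move: (subsetP sub _ cA); rewrite (negbTE cP').
  rewrite wU1 // setU11 wE1 // mulrA; congr (_ * _%:R); rewrite rvU1; congr grounded.
  apply/setP=> e; rewrite !inE -/c'.
  by case: (e == c); case: (e == c'); case: (e \in E0); case: (e \in A); case: ((e.2, e.1) \in A).
pose Q' := P' :|: rv P'.
have eQ : P :|: rv P = c |: (c' |: Q').
  rewrite eP rvU1 -/c' /Q'; apply/setP=> e; rewrite !inE.
  by case: (e == c); case: (e == c'); case: (e \in P'); case: ((e.2, e.1) \in P').
have cQ : c \notin Q' by rewrite /Q' in_setU negb_or cP'.
have c'Q : c' \notin Q' by rewrite /Q' in_setU negb_or c'P'.
have cQ' : c \notin c' |: Q' by rewrite in_setU1 ncc.
have sU x (X Y : {set V * V}) : X :|: (x |: Y) = (x |: X) :|: Y by rewrite setUCA setUA.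
have D : Dsum P E0 v0 = (1 - p c.1 c.2) * (1 - p c.1 c.2) * Dsum P' E0 v0
     + p c.1 c.2 * (1 - p c.1 c.2) * Dsum P' (c |: E0) v0
     + (1 - p c.1 c.2) * p c.1 c.2 * Dsum P' (c' |: E0) v0
     + p c.1 c.2 * p c.1 c.2 * Dsum P' (c' |: (c |: E0)) v0.
  rewrite /Dsum eQ sum_subset_U1 // sum_subset_U1 // -/Q'.
  rewrite !mulr_sumr -!big_split /=; apply: eq_bigr => B sub.
  have cB : c \notin B by apply/negP=> cB; rewrite (subsetP sub _ cB) in cQ.
  have c'B : c' \notin B by apply/negP=> hB; rewrite (subsetP sub _ hB) in c'Q.
  rewrite !wU1 // !wE1 // !in_setU1 !eqxx ncc nc'c (negbTE cB) (negbTE c'B) /= !sU.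
  rewrite pc'. ring.
rewrite U D -!IHs.
have M := Umod P' E0 v0 c.
rewrite -/c' in M.
have -> : Usum P' (c |: E0) v0 = Usum P' E0 v0 + Usum P' (c |: (c' |: E0)) v0
   - Usum P' (c' |: E0) v0 by rewrite -M addrK.
rewrite [c' |: (c |: E0)]setUCA.
ring.
Qed.

End Main.

(* Vertices {1,...,n} are 'I_n (i.e. 0,...,n-1), vertex 1 is the ordinal 0. *)
Theorem lemma3p2 (R : realFieldType) (n : nat) (hn : (0 < n)%N)
  (p : 'I_n -> 'I_n -> R)
  (hsym : forall k l, p k l = p l k)
  (hp : forall k l, k != l -> 0 <= p k l <= 1) :
  prob_connected p (fun k l : 'I_n => (k < l)%N)
  = prob_grounded p (Ordinal hn).
Proof.
set v0 := Ordinal hn.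
have Pok : forall e, e \in upairs (fun k l : 'I_n => (k < l)%N) ->
    (e.2, e.1) \notin upairs (fun k l : 'I_n => (k < l)%N).
  by move=> e; rewrite !inE /= => h; rewrite -leqNgt (ltnW h).
transitivity (Usum p (upairs (fun k l : 'I_n => (k < l)%N)) set0 v0).
  rewrite /prob_connected /Usum; apply: eq_bigr => A _; rewrite mulrC; congr (_ * _%:R).
  rewrite /uconnected /grounded set0U.
  have eqr : [rel x y | ((x, y) \in A) || ((y, x) \in A)] =2 [rel x y | (x, y) \in A :|: rv A].
    by move=> x y; rewrite /= !inE.
  have sym : connect_sym [rel x y | (x, y) \in A :|: rv A].
    by apply: sym_connect_sym => x y /=; rewrite !inE orbC.
  congr nat_of_bool; apply/idP/idP => /forallP h; apply/forallP.
    move=> w; move/forallP: (h w) => /(_ v0); by rewrite (eq_connect eqr).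
  move=> u; apply/forallP => v; rewrite (eq_connect eqr).
  by apply: connect_trans (h u) _; rewrite sym.
rewrite main // /Dsum /prob_grounded.
have -> : upairs (fun k l : 'I_n => (k < l)%N) :|: rv (upairs (fun k l : 'I_n => (k < l)%N))
          = dpairs 'I_n.
  apply/setP=> -[a b]; rewrite !inE /= -(inj_eq val_inj) /= neq_ltn.
  by [].
by apply: eq_bigr => B _; rewrite set0U mulrC.
Qed.
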